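(* Let $b_1,\dots,b_m$ be background frames and $f$ a foreground frame, with a distance $d$ satisfying the triangle inequality and $d(b_j,b_{j+1})\le\delta$ for all $1\le j<m$. Suppose $b_i$ is a strong match for $f$, with $d(f,b_i)$ uniformly distributed on $[0,\Psi]$, and let $\gamma\ge0$ be an integer with $1\le i-\gamma$ and $i+\gamma\le m$. Then the expected number of strong matches for $f$ among $b_{i-\gamma},\dots,b_{i+\gamma}$ is at least $2(\gamma+1)\left(1-\frac{\delta\gamma}{2\Psi}\right)-1$.
   Context: A background frame $b$ is a strong match for a foreground frame $f$ if $d(f,b)\le\Psi$, where $\Psi>0$ is a fixed threshold. Randomized model: given that $\{f,b\}$ is a strong match, the distance $d(f,b)$ is modeled as a sample from the uniform distribution on $[0,\Psi]$. *)

(* Defs.v *)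
From HB Require Import structures.
From mathcomp Require Import all_boot all_order all_algebra.
From mathcomp Require Import all_classical all_reals all_analysis.

(* Main.v *)
Require Import Defs.
From HB Require Import structures.
From mathcomp Require Import all_boot all_order all_algebra.
From mathcomp Require Import all_classical all_reals all_analysis.
From mathcomp Require Import measurable_realfun lebesgue_integral.
From mathcomp Require Import ring lra zify.
Import Order.TTheory GRing.Theory Num.Theory.
Local Open Scope classical_set_scope.
Local Open Scope ring_scope.
Definition kk (i j : nat) : nat := if (j <= i)%N then (i - j)%N else (j - i)%N.

Lemma sum_lemma (R : realType) (delta Psi : R) (hPsi : 0 < Psi) (i : nat) :
  forall g, (g <= i)%N ->
  \sum_(i - g <= j < (i + g).+1) (1 - (kk i j)%:R * delta / Psi)
  = 2 * (g + 1)%:R * (1 - delta * g%:R / (2 * Psi)) - 1.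
Proof.
have P0 : Psi != 0 by rewrite gt_eqF.
elim=> [|g IH] gi.
  rewrite subn0 addn0 big_nat1 /kk leqnn subnn /=.
  rewrite add0n !mul0r !mulr0 !mul0r subr0 ?subr0 mulr1 mulr1; lra.
have gi' : (g <= i)%N by apply: ltnW.
have h1 : (i - g.+1 < (i + g.+1).+1)%N by clear IH; lia.
have h2 : (i - g.+1).+1 = (i - g)%N by clear IH; lia.
have h3 : (i - g <= (i + g).+1)%N by clear IH; lia.
have h4 : (i - g.+1 <= i)%N by clear IH; lia.
have h5 : ((i + g).+1 <= i)%N = false by clear IH; lia.
have h6 : (i - (i - g.+1) = g.+1)%N by clear IH; lia.
have h7 : ((i + g).+1 - i = g.+1)%N by clear IH; lia.
rewrite big_ltn // h2 addnS big_nat_recr //= IH // /kk h4 h5 h6 h7.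
rewrite !natrD -(addn1 g) natrD; field; exact P0.
Qed.
Lemma unif_lb (R : realType) (Psi : R) (hPsi : 0 < Psi) (t : R) : t <= Psi ->
  ((t / Psi)%:E <= uniform_prob hPsi `]-oo, t])%E.
Proof.
move=> tP.
have [t0|t0] := ltP t 0.
  apply: (@le_trans _ _ 0%E); last exact: measure_ge0.
  by rewrite lee_fin; apply/ltW; rewrite pmulr_llt0 ?invr_gt0.
apply: (@le_trans _ _ (uniform_prob hPsi `[0, t])); last first.
  apply: le_measure; rewrite ?inE //=.
  by move=> x /=; rewrite !in_itv /= => /andP[].
rewrite /uniform_prob.
have -> : (\int[lebesgue_measure]_(x in `[0%R, t]) (uniform_pdf 0 Psi x)%:E =
   \int[lebesgue_measure]_(x in `[0%R, t]) (cst ((Psi - 0)^-1)%:E x))%E.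
  apply: eq_integral => x; rewrite inE /= in_itv /= => /andP[x0 xt].
  by rewrite /uniform_pdf x0 (le_trans xt tP).
rewrite integral_cst //= lebesgue_measure_itv /= lte_fin.
case: ltP => tq; first by rewrite oppr0 -EFinD -EFinM !addr0 mulrC.
have -> : t = 0 by apply/le_anti/andP.
by rewrite mul0r mule0.
Qed.
Lemma dist_chain (R : realType) (Frame : Type) (dist : Frame -> Frame -> R)
  (b : nat -> Frame) (m : nat) (delta : R)
  (dtri : forall x y z, dist x z <= dist x y + dist y z)
  (hdelta : forall j, (1 <= j < m)%N -> dist (b j) (b j.+1) <= delta) :
  forall n p, (1 <= p)%N -> (p + n.+1 <= m)%N ->
  dist (b p) (b (p + n.+1)%N) <= n.+1%:R * delta.
Proof.
elim=> [|n IH] p p1 pm.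
  by rewrite addn1 mul1r; apply: hdelta; apply/andP; split => //; lia.
apply: le_trans (dtri _ (b (p + n.+1)%N) _) _.
have -> : (p + n.+2 = (p + n.+1).+1)%N by lia.
rewrite [n.+2%:R]mulrSr mulrDl mul1r.
apply: lerD; first by apply: IH => //; lia.
apply: hdelta; apply/andP; split; lia.
Qed.

Lemma dist_ge0 (R : realType) (Frame : Type) (dist : Frame -> Frame -> R)
  (dsym : forall x y, dist x y = dist y x)
  (dtri : forall x y z, dist x z <= dist x y + dist y z) x y : 0 <= dist x y.
Proof.
have := dtri x y x; have := dtri x x x; rewrite (dsym y x); lra.
Qed.

Lemma lee_sum_nat' (R : realType) (m n : nat) (F G : nat -> \bar R) :
  (forall i, (m <= i < n)%N -> (F i <= G i)%E) ->
  (\sum_(m <= i < n) F i <= \sum_(m <= i < n) G i)%E.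
Proof. by move=> h; rewrite !big_nat; apply: lee_sum. Qed.

Theorem lemma3p5 (R : realType) (d0 : measure_display) (Omega : measurableType d0)
  (P : probability Omega R) (Frame : Type)
  (dist : Omega -> Frame -> Frame -> R) (f : Frame) (b : nat -> Frame)
  (m i gamma : nat) (delta Psi : R) (hPsi : 0 < Psi)
  (dsym : forall w x y, dist w x y = dist w y x)
  (dtri : forall w x y z, dist w x z <= dist w x y + dist w y z)
  (hdelta : forall w j, (1 <= j < m)%N -> dist w (b j) (b j.+1) <= delta)
  (hmeas : forall j, measurable_fun setT (fun w => dist w f (b j)))
  (hunif : forall A : set R, measurable A ->
     P ((fun w => dist w f (b i)) @^-1` A) = uniform_prob hPsi A)
  (hlo : (1 <= i - gamma)%N) (hhi : (i + gamma <= m)%N) :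
  ((2 * (gamma + 1)%:R * (1 - delta * gamma%:R / (2 * Psi)) - 1)%:E
   <= \int[P]_w (\sum_(i - gamma <= j < (i + gamma).+1)
                   (((dist w f (b j) <= Psi)%R)%:R : R))%:E)%E.
Proof.
pose A j := (fun w => dist w f (b i)) @^-1` `]-oo, Psi - (kk i j)%:R * delta].
have mA j : measurable (A j).
  by have := hmeas i measurableT _ (measurable_itv `]-oo, Psi - (kk i j)%:R * delta]); rewrite setTI.
have [w0 _] : exists w : Omega, True.
  case: (pselect (exists w : Omega, True)) => [//|no]; exfalso.
  have : P setT = 1%E := probability_setT P.
  have E : [set: Omega] = set0.
    by apply/seteqP; split => w // _; apply: no; exists w.
  by rewrite E measure0 => /eqP; rewrite eq_sym eqe oner_eq0.
have key j w : (i - gamma <= j < (i + gamma).+1)%N -> j != i ->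
    dist w (b i) (b j) <= (kk i j)%:R * delta.
  move=> jr ne; case: (ltngtP j i) => ji; last by move: ne; rewrite ji eqxx.
  - have := @dist_chain _ _ (dist w) b m delta (dtri w) (hdelta w) (i - j).-1 j.
    have -> : (j + (i - j).-1.+1)%N = i by lia.
    have -> : (i - j).-1.+1 = kk i j by rewrite /kk (ltnW ji); lia.
    by rewrite dsym; apply; lia.
  - have := @dist_chain _ _ (dist w) b m delta (dtri w) (hdelta w) (j - i).-1 i.
    have -> : (i + (j - i).-1.+1)%N = j by lia.
    have -> : (j - i).-1.+1 = kk i j by rewrite /kk leqNgt ji /=; lia.
    by apply; lia.
have kd j : (i - gamma <= j < (i + gamma).+1)%N -> 0 <= (kk i j)%:R * delta.
  move=> jr; case: (eqVneq j i) => [->|ne].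
    by rewrite /kk leqnn subnn mul0r.
  exact: le_trans (@dist_ge0 _ _ (dist w0) (dsym w0) (dtri w0) _ _) (key j w0 jr ne).
have lb j w : (i - gamma <= j < (i + gamma).+1)%N -> A j w -> dist w f (b j) <= Psi.
  move=> jr; rewrite /A /= in_itv /= => Xw.
  case: (eqVneq j i) => [ji|ne].
    by move: Xw; rewrite ji /kk leqnn subnn mul0r subr0.
  apply: le_trans (dtri w f (b i) (b j)) _; have := key j w jr ne; lra.
have step1 : (\int[P]_w (\sum_(i - gamma <= j < (i + gamma).+1) \1_(A j) w)%:E <=
   \int[P]_w (\sum_(i - gamma <= j < (i + gamma).+1)
                   (((dist w f (b j) <= Psi)%R)%:R : R))%:E)%E.
  apply: ge0_le_integral => //.
  - move=> w _; rewrite lee_fin; apply: sumr_ge0 => j _; by rewrite indicE ler0n.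
  - apply/measurable_EFinP; apply: measurable_sum => j; exact: measurable_indic.
  - apply/measurable_EFinP; apply: measurable_sum => j.
    have mB : measurable ((fun w => dist w f (b j)) @^-1` `]-oo, Psi]).
      by have := hmeas j measurableT _ (measurable_itv `]-oo, Psi]); rewrite setTI.
    rewrite (_ : (fun w => _) = \1_((fun w => dist w f (b j)) @^-1` `]-oo, Psi])).
      exact: measurable_indic.
    apply: funext => w; rewrite indicE; congr (_%:R).
    by congr (nat_of_bool _); apply/idP/idP; rewrite inE /= in_itv /= //.
  - move=> w _; rewrite lee_fin; apply: ler_sum_nat => j jr; rewrite indicE.
    case: (boolP (w \in A j)) => wA; last by rewrite ler0n.
    by rewrite (lb j w jr) //; rewrite inE in wA.
apply: le_trans step1.
have eqI : (\int[P]_w (\sum_(i - gamma <= j < (i + gamma).+1) \1_(A j) w)%:E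
    = \sum_(i - gamma <= j < (i + gamma).+1) P (A j))%E.
  under eq_integral do rewrite -sumEFin.
  rewrite ge0_integral_sum //.
  - by apply: eq_bigr => j _; rewrite integral_indic // setIT.
  - by move=> j; apply/measurable_EFinP; exact: measurable_indic.
rewrite eqI.
rewrite -(@sum_lemma _ delta _ hPsi i gamma); last by lia.
rewrite -sumEFin; apply: lee_sum_nat' => j jr.
rewrite /A hunif //.
have -> : 1 - (kk i j)%:R * delta / Psi = (Psi - (kk i j)%:R * delta) / Psi.
  by field; rewrite gt_eqF.
apply: unif_lb; have := kd j jr; lra.
Qed.
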